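(* Let $n\ge3$ be odd and let $0<q<q_o$, where $q_o=\frac{\sqrt{414-66\sqrt{33}}}{16}\approx0.3690$. Let $\omega=(nq,\ldots,nq,-nq,\ldots,-nq,0)\in\mathbb{R}^n$ (with $(n-1)/2$ entries equal to $nq$, then $(n-1)/2$ entries equal to $-nq$, then a final entry $0$) and $k=(n,\ldots,n)$. Then the number of equilibria $\theta\in(-\pi,\pi]^n$ satisfying $$\omega_\nu=\frac1n\sum_{\mu=1}^nk_\nu k_\mu\sin(\theta_\nu-\theta_\mu)\ (\nu=1,\ldots,n),\qquad \sum_{\mu=1}^nk_\mu e^{i\theta_\mu}\in\mathbb{R}_{\ge0},$$ is $2^n-\binom{n-1}{(n-1)/2}$. *)

(* Defs.v *)
From Stdlib Require Import Reals List.
Import ListNotations.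
Open Scope R_scope.

Definition q_o : R := sqrt (414 - 66 * sqrt 33) / 16.

(* Natural frequencies, indices nu = 0..n-1 (0-based):
   first (n-1)/2 entries are n q, next (n-1)/2 entries are -n q, last is 0. *)
Definition omega (n : nat) (q : R) (nu : nat) : R :=
  if Nat.ltb nu ((n - 1) / 2) then INR n * q
  else if Nat.ltb nu (n - 1) then - (INR n * q)
  else 0.

Definition kw (n : nat) (nu : nat) : R := INR n.

Definition th (theta : list R) (nu : nat) : R := nth nu theta 0.

(* Sum over mu = 1..n, i.e. 0-based mu = 0..n-1 (sum_f_R0 f m = f 0 + ... + f m). *)
Definition sumn (n : nat) (f : nat -> R) : R := sum_f_R0 f (n - 1).

(* theta in (-pi, pi]^n is an equilibrium with the normalization
   sum_mu k_mu e^{i theta_mu} in R_{>=0}, i.e. imaginary part 0, real part >= 0. *)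
Definition is_equilibrium (n : nat) (q : R) (theta : list R) : Prop :=
  length theta = n /\
  (forall nu, (nu < n)%nat -> - PI < th theta nu <= PI) /\
  (forall nu, (nu < n)%nat ->
     omega n q nu =
     / INR n * sumn n (fun mu => kw n nu * kw n mu * sin (th theta nu - th theta mu))) /\
  sumn n (fun mu => kw n mu * sin (th theta mu)) = 0 /\
  0 <= sumn n (fun mu => kw n mu * cos (th theta mu)).

(* Main.v *)
Require Import Defs.
From Stdlib Require Import Reals List Lia Lra FinFun ClassicalEpsilon.
From Coquelicot Require Coquelicot.
Open Scope R_scope.

Module Analysis.
Import Coquelicot.Coquelicot.
Open Scope R_scope.
Import ListNotations.

Definition hf (k e a : R) : R := sin a * (k * cos a + e).

Lemma hf_deriv k e a : is_derive (hf k e) a (k*(2*cos a^2 - 1) + e*cos a).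
Proof.
  unfold hf. auto_derive; auto.
  pose proof (sin2_cos2 a) as H. unfold Rsqr in H.
  assert (E: 1 * cos a * (k*cos a+e) + sin a*(k*(1*-sin a)) - (k*(2*cos a^2-1)+e*cos a)
     = -k*(sin a*sin a + cos a*cos a - 1)) by ring.
  rewrite H in E. lra.
Qed.

Lemma hf_cont k e : continuity (hf k e).
Proof. unfold hf. reg. Qed.

Lemma incr_open f f' u v : (forall x, is_derive f x (f' x)) ->
  (forall x, u < x < v -> 0 < f' x) ->
  forall x y, u <= x -> x < y -> y <= v -> f x < f y.
Proof.
  intros Hd Hp x y H1 H2 H3.
  destruct (MVT_cor2 f f' x y H2) as [c [Hc1 Hc2]].
  - intros c _. apply is_derive_Reals. apply Hd.
  - assert (0 < f' c) by (apply Hp; lra). nra.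
Qed.

Lemma decr_open f f' u v : (forall x, is_derive f x (f' x)) ->
  (forall x, u < x < v -> f' x < 0) ->
  forall x y, u <= x -> x < y -> y <= v -> f y < f x.
Proof.
  intros Hd Hp x y H1 H2 H3.
  destruct (MVT_cor2 f f' x y H2) as [c [Hc1 Hc2]].
  - intros c _. apply is_derive_Reals. apply Hd.
  - assert (f' c < 0) by (apply Hp; lra). nra.
Qed.

Lemma root_incr f u v q : continuity f -> u < v ->
  (forall x y, u <= x -> x < y -> y <= v -> f x < f y) ->
  f u < q -> q < f v ->
  exists r, u < r < v /\ f r = q /\ forall x, u <= x <= v -> f x = q -> x = r.
Proof.
  intros Hc uv Hm Hu Hv.
  destruct (IVT_cor (fun x => f x - q) u v) as [z [Hz1 Hz2]].
  - apply continuity_minus; auto. apply continuity_const. intros ??; auto.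
  - lra.
  - nra.
  - exists z. assert (z <> u) by (intro; subst; lra).
    assert (z <> v) by (intro; subst; lra).
    split; [lra|]. split; [lra|].
    intros x Hx Hfx. destruct (Rtotal_order x z) as [h|[h|h]]; auto.
    + pose proof (Hm x z ltac:(lra) h ltac:(lra)). lra.
    + pose proof (Hm z x ltac:(lra) h ltac:(lra)). lra.
Qed.

Lemma root_decr f u v q : continuity f -> u < v ->
  (forall x y, u <= x -> x < y -> y <= v -> f y < f x) ->
  q < f u -> f v < q ->
  exists r, u < r < v /\ f r = q /\ forall x, u <= x <= v -> f x = q -> x = r.
Proof.
  intros Hc uv Hm Hu Hv.
  assert (Hc' : continuity (fun x => - f x)) by (apply continuity_opp; auto).
  assert (Hm' : forall x y, u <= x -> x < y -> y <= v -> - f x < - f y).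
  { intros x y h1 h2 h3. pose proof (Hm x y h1 h2 h3). lra. }
  destruct (root_incr (fun x => - f x) u v (-q) Hc' uv Hm' ltac:(lra) ltac:(lra)) as [r [H1 [H2 H3]]].
  exists r. split; auto. split; [lra|]. intros x Hx Hf. apply H3; auto. lra.
Qed.

Lemma crit K e : 2 <= K -> (e = 1 \/ e = -1) -> exists c, 0 < c < PI/2 /\
  (forall a, 0 <= a < c -> 0 < K*(2*cos a^2-1) + e*cos a) /\
  (forall a, c < a <= PI/2 -> K*(2*cos a^2-1) + e*cos a < 0).
Proof.
  intros HK He.
  assert (He2 : e * e = 1) by (destruct He; subst; lra).
  set (s := sqrt (1 + 8*K^2)).
  assert (Hs : s * s = 1 + 8*K^2) by (unfold s; apply sqrt_sqrt; nra).
  assert (Hs0 : 0 <= s) by (unfold s; apply sqrt_pos).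
  assert (Hs1 : 1 < s) by nra.
  assert (Hs2 : s < 4*K + e) by (destruct He; subst; nra).
  set (x0 := (-e + s)/(4*K)).
  set (x1 := (-e - s)/(4*K)).
  assert (Hx0 : 0 < x0 < 1).
  { unfold x0. split.
    - apply Rdiv_lt_0_compat; destruct He; subst; lra.
    - apply Rmult_lt_reg_r with (4*K); [lra|]. unfold Rdiv. rewrite Rmult_assoc, Rinv_l; lra. }
  assert (Hx1 : x1 < 0).
  { unfold x1. unfold Rdiv. apply Rmult_neg_pos. destruct He; subst; lra. apply Rinv_0_lt_compat; lra. }
  assert (Hsum : x0 + x1 = - e / (2*K)) by (unfold x0, x1; field; lra).
  assert (Hprod : x0 * x1 = - / 2).
  { unfold x0, x1. replace ((- e + s) / (4 * K) * ((- e - s) / (4 * K))) with ((e*e - s*s)/(16*K*K)) by (field; lra).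
    rewrite He2, Hs. field. lra. }
  assert (Hfac : forall x, K*(2*x^2-1) + e*x = 2*K*(x - x0)*(x - x1)).
  { intros x. replace (2*K*(x - x0)*(x - x1)) with (2*K*x^2 - 2*K*(x0+x1)*x + 2*K*(x0*x1)) by ring.
    rewrite Hsum, Hprod. field. lra. }
  assert (Hc : cos (acos x0) = x0) by (apply cos_acos; lra).
  pose proof (acos_bound x0) as Hb.
  pose proof PI_RGT_0.
  exists (acos x0). split; [split|split].
  - destruct (Rle_lt_or_eq_dec 0 (acos x0)) as [h|h]; [lra|auto|].
    rewrite <- h, cos_0 in Hc. lra.
  - destruct (Rlt_le_dec (acos x0) (PI/2)) as [h|h]; auto.
    pose proof (cos_le_0 (acos x0) h ltac:(lra)). lra.
  - intros a Ha. rewrite Hfac.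
    assert (cos (acos x0) < cos a) by (apply cos_decreasing_1; lra).
    assert (0 < cos a - x0) by lra. assert (0 < cos a - x1) by lra.
    apply Rmult_lt_0_compat; [|lra]. apply Rmult_lt_0_compat; lra.
  - intros a Ha. rewrite Hfac.
    assert (cos a < cos (acos x0)) by (apply cos_decreasing_1; lra).
    assert (0 <= cos a) by (apply cos_ge_0; lra).
    assert (cos a - x0 < 0) by lra. assert (0 < cos a - x1) by lra.
    assert (0 < 2*K) by lra. 
    assert (2*K*(cos a - x0) < 0) by nra. nra.
Qed.

Definition RP q k e (l : list R) := NoDup l /\ forall a, In a l <-> (0 < a < PI/2 /\ hf k e a = q).

Lemma RP_one q k e r : 0 < r < PI/2 -> hf k e r = q ->
  (forall a, 0 < a < PI/2 -> hf k e a = q -> a = r) -> RP q k e [r].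
Proof.
  intros H1 H2 H3. split.
  - constructor; [intros h; inversion h|constructor].
  - intros a; simpl; split.
    + intros [h|[]]; subst; auto.
    + intros [h1 h2]. left. symmetry. auto.
Qed.

Lemma RP_two q k e r1 r2 : r1 <> r2 -> 0 < r1 < PI/2 -> hf k e r1 = q ->
  0 < r2 < PI/2 -> hf k e r2 = q ->
  (forall a, 0 < a < PI/2 -> hf k e a = q -> a = r1 \/ a = r2) -> RP q k e [r1; r2].
Proof.
  intros H0 H1 H2 H4 H5 H3. split.
  - constructor; [|constructor; [intros h; inversion h|constructor]].
    intros [h|[]]; auto.
  - intros a; simpl; split.
    + intros [h|[h|[]]]; subst; auto.
    + intros [h1 h2]. destruct (H3 a h1 h2); auto.
Qed.

Lemma RP_nil q k e : (forall a, 0 < a < PI/2 -> hf k e a <> q) -> RP q k e [].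
Proof.
  intros H. split; [constructor|]. intros a; simpl; split; [tauto|].
  intros [h1 h2]. apply (H a h1 h2).
Qed.

Lemma hf_0 k e : hf k e 0 = 0.
Proof. unfold hf. rewrite sin_0. ring. Qed.
Lemma hf_PI2 k e : hf k e (PI/2) = e.
Proof. unfold hf. rewrite sin_PI2, cos_PI2. ring. Qed.

Lemma roots_e1_pos q k : 0 < q < 1 -> 2 <= k -> exists r, RP q k 1 [r].
Proof.
  intros Hq Hk. pose proof PI_RGT_0.
  destruct (crit k 1 Hk ltac:(auto)) as [c [Hc [Hp Hn]]].
  assert (Hi : forall x y, 0 <= x -> x < y -> y <= c -> hf k 1 x < hf k 1 y).
  { apply (incr_open _ _ 0 c (hf_deriv k 1)). intros x hx. apply Hp. lra. }
  assert (Hd : forall x y, c <= x -> x < y -> y <= PI/2 -> hf k 1 y < hf k 1 x).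
  { apply (decr_open _ _ c (PI/2) (hf_deriv k 1)). intros x hx. apply Hn. lra. }
  assert (hc : 1 < hf k 1 c) by (rewrite <- (hf_PI2 k 1) at 1; apply Hd; lra).
  destruct (root_incr (hf k 1) 0 c q (hf_cont k 1) ltac:(lra) Hi ltac:(rewrite hf_0; lra) ltac:(lra))
    as [r [Hr1 [Hr2 Hr3]]].
  exists r. apply RP_one; auto; [lra|].
  intros a Ha Hfa. destruct (Rle_lt_dec a c) as [h|h].
  - apply Hr3; auto; lra.
  - assert (hf k 1 (PI/2) < hf k 1 a) by (apply Hd; lra). rewrite hf_PI2 in H0. lra.
Qed.

Lemma roots_e1_zero q : 0 < q < 1 -> exists r, RP q 0 1 [r].
Proof.
  intros Hq. pose proof PI_RGT_0.
  assert (Hi : forall x y, 0 <= x -> x < y -> y <= PI/2 -> hf 0 1 x < hf 0 1 y).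
  { apply (incr_open _ _ 0 (PI/2) (hf_deriv 0 1)). intros x hx.
    pose proof (cos_gt_0 x ltac:(lra) ltac:(lra)). lra. }
  destruct (root_incr (hf 0 1) 0 (PI/2) q (hf_cont 0 1) ltac:(lra) Hi ltac:(rewrite hf_0; lra) ltac:(rewrite hf_PI2; lra))
    as [r [Hr1 [Hr2 Hr3]]].
  exists r. apply RP_one; auto.
  intros a Ha Hfa. apply Hr3; auto; lra.
Qed.

Lemma roots_e1_neg q k : 0 < q < 1 -> k <= -2 -> exists r, RP q k 1 [r].
Proof.
  intros Hq Hk. pose proof PI_RGT_0.
  destruct (crit (-k) (-1) ltac:(lra) ltac:(auto)) as [c [Hc [Hp Hn]]].
  assert (Hd : forall x y, 0 <= x -> x < y -> y <= c -> hf k 1 y < hf k 1 x).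
  { apply (decr_open _ _ 0 c (hf_deriv k 1)). intros x hx.
    pose proof (Hp x ltac:(lra)). lra. }
  assert (Hi : forall x y, c <= x -> x < y -> y <= PI/2 -> hf k 1 x < hf k 1 y).
  { apply (incr_open _ _ c (PI/2) (hf_deriv k 1)). intros x hx.
    pose proof (Hn x ltac:(lra)). lra. }
  assert (hc : hf k 1 c < 0) by (rewrite <- (hf_0 k 1); apply Hd; lra).
  destruct (root_incr (hf k 1) c (PI/2) q (hf_cont k 1) ltac:(lra) Hi ltac:(lra) ltac:(rewrite hf_PI2; lra))
    as [r [Hr1 [Hr2 Hr3]]].
  exists r. apply RP_one; auto; [lra|].
  intros a Ha Hfa. destruct (Rle_lt_dec a c) as [h|h].
  - assert (hf k 1 a < hf k 1 0) by (apply Hd; lra). rewrite hf_0 in H0. lra.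
  - apply Hr3; auto; lra.
Qed.

Lemma roots_em_none q k : 0 < q -> k <= 0 -> RP q k (-1) [].
Proof.
  intros Hq Hk. apply RP_nil. intros a Ha. unfold hf.
  assert (0 < sin a) by (apply sin_gt_0; lra).
  assert (0 <= cos a) by (apply cos_ge_0; lra).
  assert (k * cos a <= 0) by nra. nra.
Qed.

Lemma qo_le k : 2 <= k -> exists a, 0 <= a <= PI/2 /\ q_o <= hf k (-1) a.
Proof.
  intros Hk. pose proof PI_RGT_0.
  set (r := sqrt 33).
  assert (Hr : r * r = 33) by (unfold r; apply sqrt_sqrt; lra).
  assert (Hr0 : 0 <= r) by (unfold r; apply sqrt_pos).
  assert (Hr1 : 5 < r < 6) by nra.
  set (xs := (1 + r)/8).
  assert (Hxs : 0 < xs < 1) by (unfold xs; lra).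
  exists (acos xs).
  pose proof (acos_bound xs).
  assert (Hc : cos (acos xs) = xs) by (apply cos_acos; lra).
  split.
  - split; [lra|]. destruct (Rle_lt_dec (acos xs) (PI/2)) as [h|h]; auto.
    pose proof (cos_le_0 (acos xs) ltac:(lra) ltac:(lra)). lra.
  - unfold hf. rewrite Hc, sin_acos by lra.
    assert (E1 : 1 - xs² = (15 - r)/32) by (unfold Rsqr, xs; nra).
    assert (E2 : (414 - 66 * r)/256 = (1 - xs²) * (2*xs-1)²) by (rewrite E1; unfold Rsqr, xs; nra).
    assert (E3 : q_o = sqrt (1 - xs²) * (2*xs-1)).
    { unfold q_o. fold r.
      replace 16 with (sqrt 256).
      2:{ replace 256 with (16*16) by ring. apply sqrt_square. lra. }
      rewrite <- sqrt_div_alt by lra. rewrite E2.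
      rewrite sqrt_mult; [|rewrite E1; lra|apply Rle_0_sqr].
      rewrite sqrt_Rsqr; [auto|unfold xs; lra]. }
    rewrite E3.
    assert (0 <= sqrt (1 - xs²)) by apply sqrt_pos.
    apply Rmult_le_compat_l; auto. nra.
Qed.

Lemma qo_lt1 : q_o < 1.
Proof.
  unfold q_o.
  set (r := sqrt 33).
  assert (Hr : r * r = 33) by (unfold r; apply sqrt_sqrt; lra).
  assert (Hr0 : 0 <= r) by (unfold r; apply sqrt_pos).
  assert (Hr1 : 5 < r < 6) by nra.
  assert (sqrt (414 - 66*r) < sqrt 256) by (apply sqrt_lt_1_alt; lra).
  replace (sqrt 256) with 16 in H by (replace 256 with (16*16) by ring; symmetry; apply sqrt_square; lra).
  lra.
Qed.

Lemma roots_em_pos q k : 0 < q < q_o -> 2 <= k -> exists r1 r2, RP q k (-1) [r1; r2].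
Proof.
  intros Hq Hk. pose proof PI_RGT_0.
  destruct (crit k (-1) Hk ltac:(auto)) as [c [Hc [Hp Hn]]].
  assert (Hi : forall x y, 0 <= x -> x < y -> y <= c -> hf k (-1) x < hf k (-1) y).
  { apply (incr_open _ _ 0 c (hf_deriv k (-1))). intros x hx. apply Hp. lra. }
  assert (Hd : forall x y, c <= x -> x < y -> y <= PI/2 -> hf k (-1) y < hf k (-1) x).
  { apply (decr_open _ _ c (PI/2) (hf_deriv k (-1))). intros x hx. apply Hn. lra. }
  destruct (qo_le k Hk) as [a2 [Ha2 Hq2]].
  assert (hc : q < hf k (-1) c).
  { destruct (Rtotal_order a2 c) as [h|[h|h]].
    - assert (hf k (-1) a2 < hf k (-1) c) by (apply Hi; lra). lra.
    - subst. lra.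
    - assert (hf k (-1) a2 < hf k (-1) c) by (apply Hd; lra). lra. }
  destruct (root_incr (hf k (-1)) 0 c q (hf_cont k (-1)) ltac:(lra) Hi ltac:(rewrite hf_0; lra) ltac:(lra))
    as [r1 [Hr1 [Hr2 Hr3]]].
  destruct (root_decr (hf k (-1)) c (PI/2) q (hf_cont k (-1)) ltac:(lra) Hd ltac:(lra) ltac:(rewrite hf_PI2; lra))
    as [r2 [Hs1 [Hs2 Hs3]]].
  exists r1, r2. apply RP_two; auto; try lra.
  intros a Ha Hfa. destruct (Rle_lt_dec a c) as [h|h].
  - left. apply Hr3; auto; lra.
  - right. apply Hs3; auto; lra.
Qed.
End Analysis.
Import Analysis.
Import ListNotations.

Fixpoint allb (L : nat) : list (list bool) :=
  match L with
  | O => [[]]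
  | S L' => map (cons true) (allb L') ++ map (cons false) (allb L')
  end.

Definition ct (B : list bool) : nat := length (filter (fun t => t) B).

Lemma allb_in L B : In B (allb L) <-> length B = L.
Proof.
  revert B; induction L; intros B; simpl.
  - split; [intros [h|[]]; subst; auto|]. destruct B; simpl; try lia; auto.
  - rewrite in_app_iff, !in_map_iff. split.
    + intros [[x [h1 h2]]|[x [h1 h2]]]; subst; simpl; f_equal; apply IHL; auto.
    + destruct B as [|t B]; simpl; [lia|]. intros h.
      destruct t; [left|right]; exists B; split; auto; apply IHL; lia.
Qed.

Lemma allb_nodup L : NoDup (allb L).
Proof.
  induction L; simpl.
  - constructor; [simpl; tauto|constructor].
  - apply NoDup_app.
    + apply Injective_map_NoDup; auto. intros x y h; inversion h; auto.
    + apply Injective_map_NoDup; auto. intros x y h; inversion h; auto.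
    + intros a h1 h2. apply in_map_iff in h1, h2.
      destruct h1 as [x [h1 _]], h2 as [y [h2 _]]. subst. inversion h2.
Qed.

Lemma allb_length L : length (allb L) = (2 ^ L)%nat.
Proof.
  induction L; simpl; auto. rewrite length_app, !length_map, IHL. lia.
Qed.

Lemma length_filter_map {A B} (P : B -> bool) (f : A -> B) X :
  length (filter P (map f X)) = length (filter (fun x => P (f x)) X).
Proof. induction X; simpl; auto. destruct (P (f a)); simpl; auto. Qed.

Lemma filter_app_len {A} (P : A -> bool) X Y :
  length (filter P (X ++ Y)) = (length (filter P X) + length (filter P Y))%nat.
Proof. rewrite filter_app, length_app. auto. Qed.

Lemma count_neg L : forall P : list bool -> bool,
  length (filter P (allb L)) = length (filter (fun B => P (map negb B)) (allb L)).
Proof.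
  induction L; intros P; simpl; auto.
  rewrite !filter_app_len, !length_filter_map.
  rewrite (IHL (fun B => P (true :: B))), (IHL (fun B => P (false :: B))). simpl. lia.
Qed.

Lemma ct_negb B : ct (map negb B) = (length B - ct B)%nat.
Proof.
  unfold ct. induction B as [|t B IH]; simpl; auto.
  destruct t; simpl; rewrite IH.
  - lia.
  - assert (length (filter (fun t => t) B) <= length B)%nat by apply filter_length_le. destruct (length (filter (fun t => t) B)); lia.
Qed.

Lemma ct_le B : (ct B <= length B)%nat.
Proof. apply filter_length_le. Qed.

Lemma count_sym m : length (filter (fun B => Nat.ltb m (ct B)) (allb (2*m))) =
                    length (filter (fun B => Nat.ltb (ct B) m) (allb (2*m))).
Proof.
  rewrite count_neg. f_equal. apply filter_ext_in. intros B hB.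
  apply allb_in in hB. rewrite ct_negb, hB.
  pose proof (ct_le B).
  destruct (Nat.ltb m (2*m - ct B)) eqn:E1; destruct (Nat.ltb (ct B) m) eqn:E2; auto.
  - apply Nat.ltb_lt in E1. apply Nat.ltb_ge in E2. lia.
  - apply Nat.ltb_ge in E1. apply Nat.ltb_lt in E2. lia.
Qed.

Lemma count_part m X :
  (length (filter (fun B => Nat.ltb m (ct B)) X) + length (filter (fun B => Nat.ltb (ct B) m) X)
   + length (filter (fun B => Nat.eqb (ct B) m) X) = length X)%nat.
Proof.
  induction X as [|B X IH]; simpl; auto.
  destruct (Nat.ltb_spec m (ct B)); destruct (Nat.ltb_spec (ct B) m);
  destruct (Nat.eqb_spec (ct B) m); simpl; lia.
Qed.

Lemma Cn0 n : Binomial.C n 0 = 1.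
Proof. unfold Binomial.C. rewrite Nat.sub_0_r. simpl. field. apply INR_fact_neq_0. Qed.
Lemma Cnn n : Binomial.C n n = 1.
Proof. unfold Binomial.C. rewrite Nat.sub_diag. simpl. field. apply INR_fact_neq_0. Qed.

Lemma lfme {A B} (P : B -> bool) (f : A -> B) (Q : A -> bool) X :
  (forall x, P (f x) = Q x) -> length (filter P (map f X)) = length (filter Q X).
Proof. intros H. induction X; simpl; auto. rewrite H. destruct (Q a); simpl; auto. Qed.

Lemma filter_false_len {A} (X : list A) : length (filter (fun _ => false) X) = O.
Proof. induction X; simpl; auto. Qed.

Lemma count_binom L : forall j,
  ((j <= L)%nat -> INR (length (filter (fun B => Nat.eqb (ct B) j) (allb L))) = Binomial.C L j) /\
  ((L < j)%nat -> length (filter (fun B => Nat.eqb (ct B) j) (allb L)) = O).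
Proof.
  induction L; intros j.
  - destruct j.
    + split; intros; [|lia]. rewrite Cn0. simpl. lra.
    + split; intros; [lia|]. simpl. auto.
  - simpl allb. rewrite filter_app_len.
    rewrite (lfme (fun B => Nat.eqb (ct B) j) (cons true) (fun x => Nat.eqb (S (ct x)) j) (allb L) (fun x => eq_refl)).
    rewrite (lfme (fun B => Nat.eqb (ct B) j) (cons false) (fun x => Nat.eqb (ct x) j) (allb L) (fun x => eq_refl)).
    destruct j as [|j].
    + split; intros; [|lia].
      rewrite (filter_ext (fun x => Nat.eqb (S (ct x)) 0) (fun _ => false)) by auto.
      rewrite filter_false_len. simpl plus.
      destruct (IHL 0%nat) as [h _]. rewrite Cn0. rewrite h by lia. apply Cn0.
    + rewrite (filter_ext (fun x => Nat.eqb (S (ct x)) (S j)) (fun x => Nat.eqb (ct x) j)) by auto.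
      destruct (IHL j) as [h1 h2]. destruct (IHL (S j)) as [h3 h4].
      split; intros H.
      * rewrite plus_INR. destruct (Nat.eq_dec j L).
        -- subst. rewrite h4 by lia. rewrite h1 by lia. rewrite !Cnn. simpl; lra.
        -- rewrite h1, h3 by lia. apply Binomial.pascal. lia.
      * rewrite h2, h4 by lia. auto.
Qed.

Definition lsum {A} (F : A -> R) (l : list A) : R := fold_right (fun x s => F x + s) 0 l.

Lemma lsum_app {A} (F : A -> R) l1 l2 : lsum F (l1 ++ l2) = lsum F l1 + lsum F l2.
Proof. induction l1; simpl; [ring|]. rewrite IHl1. ring. Qed.
Lemma lsum_map {A B} (F : B -> R) (g : A -> B) l : lsum F (map g l) = lsum (fun x => F (g x)) l.
Proof. induction l; simpl; auto. rewrite IHl. auto. Qed.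
Lemma lsum_ext {A} (F G : A -> R) l : (forall x, F x = G x) -> lsum F l = lsum G l.
Proof. intros H; induction l; simpl; auto. rewrite IHl, H. auto. Qed.
Lemma lsum_const {A} c (l : list A) : lsum (fun _ => c) l = INR (length l) * c.
Proof. induction l; simpl length; [simpl; ring|]. rewrite S_INR. simpl. rewrite IHl. ring. Qed.
Lemma lsum_lin {A} (F G : A -> R) al be l :
  lsum (fun x => al * F x + be * G x) l = al * lsum F l + be * lsum G l.
Proof. induction l; simpl; [ring|]. rewrite IHl. ring. Qed.

Definition sg (t : bool) : R := if t then 1 else -1.
Lemma lsum_sg B : lsum sg B = 2 * INR (ct B) - INR (length B).
Proof.
  unfold ct. induction B as [|t B IH]; [simpl; ring|].
  destruct t.
  - change (lsum sg (true :: B)) with (1 + lsum sg B).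
    change (filter (fun t : bool => t) (true :: B)) with (true :: filter (fun t : bool => t) B).
    change (length (true :: ?x)) with (S (length x)). rewrite !S_INR, IH. ring.
  - change (lsum sg (false :: B)) with (-1 + lsum sg B).
    change (filter (fun t : bool => t) (false :: B)) with (filter (fun t : bool => t) B).
    change (length (false :: B)) with (S (length B)). rewrite !S_INR, IH. ring.
Qed.
Lemma ct_app B1 B2 : ct (B1 ++ B2) = (ct B1 + ct B2)%nat.
Proof. unfold ct. rewrite filter_app, length_app. auto. Qed.

Lemma sum_lsum (F : R -> R) : forall l f, l <> [] -> (forall mu, f mu = F (nth mu l 0)) ->
  sum_f_R0 f (length l - 1) = lsum F l.
Proof.
  induction l as [|x l IH]; intros f Hl Hf; [congruence|].
  destruct l as [|y l].
  - simpl. rewrite Hf. simpl. ring.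
  - replace (length (x :: y :: l) - 1)%nat with (S (length (y :: l) - 1)) by (simpl; lia).
    rewrite decomp_sum by lia. rewrite Nat.pred_succ.
    rewrite (IH (fun i => f (S i))); [|congruence|].
    + rewrite Hf. simpl. auto.
    + intros mu. rewrite Hf. auto.
Qed.

Definition f1 a (t : bool) := if t then a else PI - a.
Definition f2 a (t : bool) := if t then - a else a - PI.
Definition f3 (e : bool) := if e then 0 else PI.
Definition mk m B e a := map (f1 a) (firstn m B) ++ map (f2 a) (skipn m B) ++ [f3 e].

Lemma mk_len m B e a : length B = (2*m)%nat -> length (mk m B e a) = (2*m+1)%nat.
Proof.
  intros H. unfold mk. rewrite !length_app, !length_map, length_firstn, length_skipn. simpl. lia.
Qed.

Lemma mk_sin m B e a : length B = (2*m)%nat -> lsum sin (mk m B e a) = 0.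
Proof.
  intros H. unfold mk. rewrite !lsum_app, !lsum_map.
  rewrite (lsum_ext (fun x => sin (f1 a x)) (fun _ => sin a)).
  2:{ intros []; simpl; auto. rewrite sin_PI_x. auto. }
  rewrite (lsum_ext (fun x => sin (f2 a x)) (fun _ => - sin a)).
  2:{ intros []; simpl; auto. apply sin_neg.
      replace (a - PI) with (- (PI - a)) by ring. rewrite sin_neg, sin_PI_x. auto. }
  rewrite !lsum_const, length_firstn, length_skipn. simpl.
  replace (Init.Nat.min m (length B)) with m by lia.
  replace (length B - m)%nat with m by lia.
  destruct e; simpl; [rewrite sin_0|rewrite sin_PI]; ring.
Qed.

Lemma mk_cos m B e a : length B = (2*m)%nat ->
  lsum cos (mk m B e a) = (2 * INR (ct B) - 2 * INR m) * cos a + sg e.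
Proof.
  intros H. unfold mk. rewrite !lsum_app, !lsum_map.
  rewrite (lsum_ext (fun x => cos (f1 a x)) (fun x => cos a * sg x + 0 * sg x)).
  2:{ intros []; simpl; [ring|]. rewrite Rtrigo_facts.cos_pi_minus. ring. }
  rewrite (lsum_ext (fun x => cos (f2 a x)) (fun x => cos a * sg x + 0 * sg x)).
  2:{ intros []; simpl. rewrite cos_neg; ring.
      replace (a - PI) with (- (PI - a)) by ring. rewrite cos_neg, Rtrigo_facts.cos_pi_minus. ring. }
  rewrite !lsum_lin, !lsum_sg.
  rewrite length_firstn, length_skipn.
  replace (Init.Nat.min m (length B)) with m by lia.
  replace (length B - m)%nat with m by lia.
  assert (Hct : ct B = (ct (firstn m B) + ct (skipn m B))%nat) by (rewrite <- ct_app, firstn_skipn; auto).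
  rewrite Hct, plus_INR. destruct e; simpl; [rewrite cos_0|rewrite cos_PI]; unfold sg; ring.
Qed.

Lemma nth_map0 (f : bool -> R) L i : (i < length L)%nat -> nth i (map f L) 0 = f (nth i L false).
Proof.
  intros H. rewrite (nth_indep (map f L) (n:=i) 0 (f false)) by (rewrite length_map; auto). apply map_nth.
Qed.

Lemma mk_nth1 m B e a i : length B = (2*m)%nat -> (i < m)%nat ->
  nth i (mk m B e a) 0 = f1 a (nth i B false).
Proof.
  intros H Hi. unfold mk. rewrite app_nth1 by (rewrite length_map, length_firstn; lia).
  rewrite nth_map0 by (rewrite length_firstn; lia). rewrite nth_firstn.
  destruct (Nat.ltb_spec i m); [auto|lia].
Qed.

Lemma mk_nth2 m B e a i : length B = (2*m)%nat -> (m <= i < 2*m)%nat ->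
  nth i (mk m B e a) 0 = f2 a (nth i B false).
Proof.
  intros H Hi. unfold mk. rewrite app_nth2 by (rewrite length_map, length_firstn; lia).
  rewrite length_map, length_firstn.
  rewrite app_nth1 by (rewrite length_map, length_skipn; lia).
  rewrite nth_map0 by (rewrite length_skipn; lia). rewrite nth_skipn.
  f_equal. f_equal. lia.
Qed.

Lemma mk_nth3 m B e a : length B = (2*m)%nat -> nth (2*m) (mk m B e a) 0 = f3 e.
Proof.
  intros H. unfold mk. rewrite app_nth2 by (rewrite length_map, length_firstn; lia).
  rewrite length_map, length_firstn.
  rewrite app_nth2 by (rewrite length_map, length_skipn; lia).
  rewrite length_map, length_skipn.
  replace (2 * m - Init.Nat.min m (length B) - (length B - m))%nat with O by lia. auto.
Qed.

Definition dec (x : R) : bool := if Rle_dec (Rabs x) (PI/2) then true else false.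
Definition recA (x : R) : R := if Rle_dec (Rabs x) (PI/2) then Rabs x else PI - Rabs x.

Lemma dec_f1 a t : 0 < a < PI/2 -> dec (f1 a t) = t.
Proof.
  intros Ha. pose proof PI_RGT_0. unfold dec, f1. destruct t.
  - rewrite Rabs_right by lra. destruct (Rle_dec a (PI/2)); auto; lra.
  - rewrite Rabs_right by lra. destruct (Rle_dec (PI - a) (PI/2)); auto; lra.
Qed.
Lemma dec_f2 a t : 0 < a < PI/2 -> dec (f2 a t) = t.
Proof.
  intros Ha. pose proof PI_RGT_0. unfold dec, f2. destruct t.
  - rewrite Rabs_left by lra. destruct (Rle_dec (- - a) (PI/2)); auto; lra.
  - rewrite Rabs_left by lra. destruct (Rle_dec (- (a - PI)) (PI/2)); auto; lra.
Qed.
Lemma dec_f3 e : dec (f3 e) = e.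
Proof.
  pose proof PI_RGT_0. unfold dec, f3. destruct e.
  - rewrite Rabs_R0. destruct (Rle_dec 0 (PI/2)); auto; lra.
  - rewrite Rabs_right by lra. destruct (Rle_dec PI (PI/2)); auto; lra.
Qed.
Lemma recA_f1 a t : 0 < a < PI/2 -> recA (f1 a t) = a.
Proof.
  intros Ha. pose proof PI_RGT_0. unfold recA, f1. destruct t.
  - rewrite Rabs_right by lra. destruct (Rle_dec a (PI/2)); auto; lra.
  - rewrite Rabs_right by lra. destruct (Rle_dec (PI - a) (PI/2)); lra.
Qed.

Lemma dec_mk m B e a : length B = (2*m)%nat -> 0 < a < PI/2 -> map dec (mk m B e a) = B ++ [e].
Proof.
  intros H Ha. unfold mk. rewrite !map_app, !map_map. simpl. rewrite dec_f3.
  rewrite (map_ext (fun x => dec (f1 a x)) (fun x => x)) by (intros; apply dec_f1; auto).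
  rewrite (map_ext (fun x => dec (f2 a x)) (fun x => x)) by (intros; apply dec_f2; auto).
  rewrite !map_id. rewrite app_assoc, firstn_skipn. auto.
Qed.

Lemma mk_inj m B e a B' e' a' : (1 <= m)%nat -> length B = (2*m)%nat -> length B' = (2*m)%nat ->
  0 < a < PI/2 -> 0 < a' < PI/2 -> mk m B e a = mk m B' e' a' -> B = B' /\ e = e' /\ a = a'.
Proof.
  intros Hm H1 H2 Ha Ha' E.
  assert (E1 := f_equal (map dec) E). rewrite !dec_mk in E1 by auto.
  apply app_inj_tail in E1. destruct E1 as [E1 E2]. subst.
  split; auto. split; auto.
  assert (E3 := f_equal (fun l => recA (nth 0 l 0)) E). simpl in E3.
  rewrite !mk_nth1 in E3 by (auto; lia). rewrite !recA_f1 in E3 by auto. auto.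
Qed.

Lemma sum_eq1 n th0 nu : length th0 = n -> (1 <= n)%nat ->
  sumn n (fun mu => kw n nu * kw n mu * sin (th th0 nu - th th0 mu)) =
  INR n * INR n * (sin (th th0 nu) * lsum cos th0 - cos (th th0 nu) * lsum sin th0).
Proof.
  intros Hl Hn. unfold sumn. replace (n - 1)%nat with (length th0 - 1)%nat by lia.
  rewrite (sum_lsum (fun x => INR n * INR n * sin (th th0 nu - x))).
  - rewrite (lsum_ext _ (fun x => (INR n * INR n * sin (th th0 nu)) * cos x
                              + (- (INR n * INR n * cos (th th0 nu))) * sin x)).
    + rewrite lsum_lin. ring.
    + intros x. rewrite sin_minus. ring.
  - destruct th0; simpl in Hl; [lia|congruence].
  - intros mu. unfold kw, th. auto.
Qed.

Lemma sum_eqF n th0 (F : R -> R) : length th0 = n -> (1 <= n)%nat ->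
  sumn n (fun mu => kw n mu * F (th th0 mu)) = INR n * lsum F th0.
Proof.
  intros Hl Hn. unfold sumn. replace (n - 1)%nat with (length th0 - 1)%nat by lia.
  rewrite (sum_lsum (fun x => INR n * F x)).
  - rewrite (lsum_ext _ (fun x => INR n * F x + 0 * F x)) by (intros; ring).
    rewrite lsum_lin. ring.
  - destruct th0; simpl in Hl; [lia|congruence].
  - intros mu. unfold kw, th. auto.
Qed.

Lemma omega_val m q nu : omega (2*m+1) q nu =
  if Nat.ltb nu m then INR (2*m+1) * q else if Nat.ltb nu (2*m) then - (INR (2*m+1) * q) else 0.
Proof.
  unfold omega. replace (2*m+1-1)%nat with (m*2)%nat by lia.
  rewrite Nat.div_mul by lia. replace (m*2)%nat with (2*m)%nat by lia. auto.
Qed.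

Definition kk m B := 2 * INR (ct B) - 2 * INR m.

Lemma mk_equil m q B e a : (1 <= m)%nat -> length B = (2*m)%nat -> 0 < a < PI/2 ->
  hf (kk m B) (sg e) a = q -> 0 < q -> is_equilibrium (2*m+1) q (mk m B e a).
Proof.
  intros Hm HB Ha Hh Hq. pose proof PI_RGT_0.
  assert (Hlen := mk_len m B e a HB).
  assert (Hs := mk_sin m B e a HB).
  assert (Hc := mk_cos m B e a HB).
  unfold hf in Hh. fold (kk m B) in Hc.
  assert (Hsa : 0 < sin a) by (apply sin_gt_0; lra).
  assert (HC : 0 < kk m B * cos a + sg e) by nra.
  assert (Hn : 0 < INR (2*m+1)) by (apply lt_0_INR; lia).
  split; [auto|split; [|split; [|split]]].
  - intros nu Hnu. unfold th.
    destruct (Nat.lt_ge_cases nu m).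
    + rewrite mk_nth1 by auto. destruct (nth nu B false); simpl; lra.
    + destruct (Nat.lt_ge_cases nu (2*m)).
      * rewrite mk_nth2 by (auto; lia). destruct (nth nu B false); simpl; lra.
      * replace nu with (2*m)%nat by lia. rewrite mk_nth3 by auto. destruct e; simpl; lra.
  - intros nu Hnu. rewrite sum_eq1 by (auto; lia). rewrite Hs, Hc, omega_val.
    unfold th.
    destruct (Nat.ltb_spec nu m).
    + rewrite mk_nth1 by auto.
      replace (sin (f1 a (nth nu B false))) with (sin a)
        by (destruct (nth nu B false); simpl; auto; rewrite sin_PI_x; auto).
      rewrite <- Hh. field. lra.
    + destruct (Nat.ltb_spec nu (2*m)).
      * rewrite mk_nth2 by (auto; lia).
        replace (sin (f2 a (nth nu B false))) with (- sin a).
        -- rewrite <- Hh. field. lra.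
        -- destruct (nth nu B false); simpl. rewrite sin_neg; auto.
           replace (a - PI) with (- (PI - a)) by ring. rewrite sin_neg, sin_PI_x. auto.
      * replace nu with (2*m)%nat by lia. rewrite mk_nth3 by auto.
        replace (sin (f3 e)) with 0 by (destruct e; simpl; [rewrite sin_0|rewrite sin_PI]; auto).
        field. lra.
  - rewrite (sum_eqF _ _ sin) by (auto; lia). rewrite Hs. ring.
  - rewrite (sum_eqF _ _ cos) by (auto; lia). rewrite Hc. nra.
Qed.

Lemma sin_sol x a : - PI <= x <= PI -> 0 < a <= PI/2 -> sin x = sin a -> x = a \/ x = PI - a.
Proof.
  intros Hx Ha E. pose proof PI_RGT_0.
  assert (Hsa : 0 < sin a) by (apply sin_gt_0; lra).
  assert (Hx0 : 0 < x).
  { destruct (Rle_lt_dec x 0) as [h|h]; auto.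
    assert (0 <= sin (- x)) by (apply sin_ge_0; lra). rewrite sin_neg in H0. lra. }
  assert (Hx1 : x < PI).
  { destruct (Rle_lt_or_eq_dec x PI) as [h|h]; [lra|auto|]. subst. rewrite sin_PI in E. lra. }
  destruct (Rle_lt_dec x (PI/2)) as [h|h].
  - left. destruct (Rtotal_order x a) as [h1|[h1|h1]]; auto.
    + pose proof (sin_increasing_1 x a ltac:(lra) h ltac:(lra) ltac:(lra) h1). lra.
    + pose proof (sin_increasing_1 a x ltac:(lra) ltac:(lra) ltac:(lra) h h1). lra.
  - right. assert (E2 : sin (PI - x) = sin a) by (rewrite sin_PI_x; auto).
    set (y := PI - x) in *.
    destruct (Rtotal_order y a) as [h1|[h1|h1]]; [| unfold y in h1; lra |].
    + pose proof (sin_increasing_1 y a ltac:(unfold y; lra) ltac:(unfold y; lra) ltac:(lra) ltac:(lra) h1). lra.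
    + pose proof (sin_increasing_1 a y ltac:(lra) ltac:(lra) ltac:(unfold y; lra) ltac:(unfold y; lra) h1). lra.
Qed.

Lemma sin_zero_sol x : - PI < x <= PI -> sin x = 0 -> x = 0 \/ x = PI.
Proof.
  intros Hx E. pose proof PI_RGT_0. destruct (sin_eq_0_0 x E) as [k Hk]. subst.
  assert (h1 : -1 < IZR k).
  { destruct (Rle_lt_dec (IZR k) (-1)); auto. nra. }
  assert (h2 : IZR k <= 1).
  { destruct (Rle_lt_dec (IZR k) 1); auto. nra. }
  apply lt_IZR in h1. apply le_IZR in h2.
  assert (k = 0%Z \/ k = 1%Z) as [-> | ->] by lia; [left|right]; simpl; ring.
Qed.

Lemma f1_dec a x : 0 < a <= PI/2 -> x = a \/ x = PI - a -> f1 a (dec x) = x.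
Proof.
  intros Ha Hx. pose proof PI_RGT_0. unfold dec, f1.
  destruct (Rle_dec (Rabs x) (PI/2)) as [h|h]; destruct Hx; subst; auto.
  - rewrite Rabs_right in h by lra. lra.
  - exfalso. apply h. rewrite Rabs_right by lra. lra.
Qed.
Lemma f2_dec a x : 0 < a <= PI/2 -> x = - a \/ x = a - PI -> f2 a (dec x) = x.
Proof.
  intros Ha Hx. pose proof PI_RGT_0. unfold dec, f2.
  destruct (Rle_dec (Rabs x) (PI/2)) as [h|h]; destruct Hx; subst; auto.
  - rewrite Rabs_left1 in h by lra. lra.
  - exfalso. apply h. rewrite Rabs_left by lra. lra.
Qed.
Lemma f3_dec x : x = 0 \/ x = PI -> f3 (dec x) = x.
Proof.
  intros Hx. pose proof PI_RGT_0. unfold dec, f3.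
  destruct (Rle_dec (Rabs x) (PI/2)) as [h|h]; destruct Hx; subst; auto.
  - rewrite Rabs_right in h by lra. lra.
  - exfalso. apply h. rewrite Rabs_R0. lra.
Qed.

Lemma nthB m th0 nu : (nu < 2*m)%nat -> (2*m <= length th0)%nat ->
  nth nu (map dec (firstn (2*m) th0)) false = dec (nth nu th0 0).
Proof.
  intros H1 H2.
  rewrite (nth_indep (map dec (firstn (2*m) th0)) (n:=nu) false (dec 0))
    by (rewrite length_map, length_firstn; lia).
  rewrite map_nth, nth_firstn. destruct (Nat.ltb_spec nu (2*m)); auto; lia.
Qed.

Lemma equil_mk m q th0 : (1 <= m)%nat -> 0 < q < 1 -> is_equilibrium (2*m+1) q th0 ->
  exists B e a, length B = (2*m)%nat /\ 0 < a < PI/2 /\ hf (kk m B) (sg e) a = q /\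
    th0 = mk m B e a.
Proof.
  intros Hm Hq [Hl [Hr [Heq [Hs Hc]]]]. pose proof PI_RGT_0.
  assert (Hn : 0 < INR (2*m+1)) by (apply lt_0_INR; lia).
  rewrite (sum_eqF _ _ sin) in Hs by (auto; lia).
  rewrite (sum_eqF _ _ cos) in Hc by (auto; lia).
  set (S := lsum sin th0) in *. set (C := lsum cos th0) in *.
  assert (HS : S = 0) by nra.
  assert (HC : 0 <= C) by nra.
  assert (Hnu : forall nu, (nu < 2*m+1)%nat ->
     omega (2*m+1) q nu = INR (2*m+1) * (sin (th th0 nu) * C)).
  { intros nu h. rewrite (Heq nu h). rewrite sum_eq1 by (auto; lia). fold S C. rewrite HS. field. lra. }
  assert (H1 : forall nu, (nu < m)%nat -> sin (th th0 nu) * C = q).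
  { intros nu h. assert (E := Hnu nu ltac:(lia)). rewrite omega_val in E.
    destruct (Nat.ltb_spec nu m); [|lia]. apply Rmult_eq_reg_l with (INR (2*m+1)); lra. }
  assert (H2 : forall nu, (m <= nu < 2*m)%nat -> sin (th th0 nu) * C = - q).
  { intros nu h. assert (E := Hnu nu ltac:(lia)). rewrite omega_val in E.
    destruct (Nat.ltb_spec nu m); [lia|]. destruct (Nat.ltb_spec nu (2*m)); [|lia].
    apply Rmult_eq_reg_l with (INR (2*m+1)); lra. }
  assert (H3 : sin (th th0 (2*m)) * C = 0).
  { assert (E := Hnu (2*m)%nat ltac:(lia)). rewrite omega_val in E.
    destruct (Nat.ltb_spec (2*m) m); [lia|]. destruct (Nat.ltb_spec (2*m) (2*m)); [lia|].
    apply Rmult_eq_reg_l with (INR (2*m+1)); lra. }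
  assert (HC0 : 0 < C).
  { destruct HC as [h|h]; auto. assert (E := H1 O ltac:(lia)). rewrite <- h in E. lra. }
  set (x0 := th th0 0).
  assert (Hx0r := Hr O ltac:(lia)). fold x0 in Hx0r.
  assert (Hsx0 : sin x0 * C = q) by (apply H1; lia).
  assert (Hsx0p : 0 < sin x0) by nra.
  assert (Hx0 : 0 < x0 < PI).
  { split.
    - destruct (Rle_lt_dec x0 0) as [h|h]; auto.
      assert (0 <= sin (- x0)) by (apply sin_ge_0; lra). rewrite sin_neg in H0. lra.
    - destruct (Rle_lt_or_eq_dec x0 PI) as [h|h]; [lra|auto|]. rewrite h, sin_PI in Hsx0p. lra. }
  set (a := if Rle_dec x0 (PI/2) then x0 else PI - x0).
  assert (Ha : 0 < a <= PI/2 /\ sin a = sin x0).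
  { unfold a. destruct (Rle_dec x0 (PI/2)); split; try lra; auto. apply sin_PI_x. }
  destruct Ha as [Ha Hsa].
  assert (Hf : forall nu, (nu < m)%nat -> th th0 nu = a \/ th th0 nu = PI - a).
  { intros nu h. apply sin_sol; auto.
    - pose proof (Hr nu ltac:(lia)). lra.
    - rewrite Hsa. apply Rmult_eq_reg_r with C; [|lra]. rewrite H1, Hsx0; auto. }
  assert (Hg : forall nu, (m <= nu < 2*m)%nat -> th th0 nu = - a \/ th th0 nu = a - PI).
  { intros nu h. destruct (sin_sol (- th th0 nu) a) as [E|E]; auto.
    - pose proof (Hr nu ltac:(lia)). lra.
    - rewrite Hsa, sin_neg. apply Rmult_eq_reg_r with C; [|lra].
      rewrite Hsx0. rewrite <- Ropp_mult_distr_l, H2; auto. ring.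
    - left; lra.
    - right; lra. }
  assert (Hh : th th0 (2*m) = 0 \/ th th0 (2*m) = PI).
  { apply sin_zero_sol. apply Hr; lia. apply Rmult_eq_reg_r with C; [|lra]. rewrite H3. ring. }
  set (B := map dec (firstn (2*m) th0)).
  set (e := dec (th th0 (2*m))).
  assert (HB : length B = (2*m)%nat) by (unfold B; rewrite length_map, length_firstn; lia).
  assert (Eth : th0 = mk m B e a).
  { apply nth_ext with 0 0; [rewrite mk_len; auto|].
    intros nu hnu. rewrite Hl in hnu.
    destruct (Nat.lt_ge_cases nu m).
    - rewrite mk_nth1 by auto. unfold B. rewrite nthB by lia.
      symmetry. apply f1_dec; auto. apply Hf; auto.
    - destruct (Nat.lt_ge_cases nu (2*m)).
      + rewrite mk_nth2 by (auto; lia). unfold B. rewrite nthB by lia.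
        symmetry. apply f2_dec; auto. apply Hg; lia.
      + replace nu with (2*m)%nat by lia. rewrite mk_nth3 by auto. unfold e.
        symmetry. apply f3_dec; auto. }
  clearbody B e.
  assert (HCv : C = kk m B * cos a + sg e) by (unfold C; rewrite Eth; apply mk_cos; auto).
  assert (HqC : q = sin a * C) by (rewrite Hsa; lra).
  exists B, e, a. split; auto. split; [split; [lra|]|split; auto].
  - destruct (Rle_lt_or_eq_dec a (PI/2)) as [h|h]; auto; [lra|].
    exfalso. rewrite HCv, h, sin_PI2, cos_PI2 in HqC. destruct e; simpl in HqC; lra.
  - unfold hf. rewrite <- HCv. lra.
Qed.

Lemma NoDup_map_in {A B} (f : A -> B) l : NoDup l ->
  (forall x y, In x l -> In y l -> f x = f y -> x = y) -> NoDup (map f l).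
Proof.
  induction l as [|x l IH]; intros Hl Hi; simpl; [constructor|].
  inversion Hl; subst. constructor.
  - intros h. apply in_map_iff in h. destruct h as [y [h1 h2]].
    assert (y = x) by (apply Hi; simpl; auto). subst. contradiction.
  - apply IH; auto. intros; apply Hi; simpl; auto.
Qed.

Lemma NoDup_flat_map' {A B} (f : A -> list B) l : NoDup l -> (forall x, In x l -> NoDup (f x)) ->
  (forall x y z, In x l -> In y l -> In z (f x) -> In z (f y) -> x = y) -> NoDup (flat_map f l).
Proof.
  induction l as [|x l IH]; intros Hl Hn Hi; simpl; [constructor|].
  inversion Hl; subst. apply NoDup_app.
  - apply Hn; simpl; auto.
  - apply IH; auto; intros; [apply Hn|apply (Hi x0 y z)]; simpl; auto.
  - intros z h1 h2. apply in_flat_map in h2. destruct h2 as [y [h2 h3]].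
    assert (x = y) by (apply (Hi x y z); simpl; auto). subst. contradiction.
Qed.

Lemma sum_count (P : list bool -> bool) (g : list bool -> nat) X :
  (forall B, g B = (1 + if P B then 2 else 0)%nat) ->
  list_sum (map g X) = (length X + 2 * length (filter P X))%nat.
Proof.
  intros Hg. induction X as [|B X IH]; simpl; auto. rewrite Hg, IH.
  destruct (P B); simpl; lia.
Qed.

Theorem theorem5 (n : nat) (q : R) :
  (3 <= n)%nat -> Nat.Odd n -> 0 < q -> q < q_o ->
  exists l : list (list R),
    NoDup l /\
    (forall theta, In theta l <-> is_equilibrium n q theta) /\
    INR (length l) = 2 ^ n - Binomial.C (n - 1) ((n - 1) / 2).
Proof.
  intros Hn [m Hm] Hq Hqo. subst n.
  assert (Hm1 : (1 <= m)%nat) by lia. pose proof qo_lt1.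
  replace (2*m+1-1)%nat with (m*2)%nat by lia. rewrite Nat.div_mul by lia.
  replace (m*2)%nat with (2*m)%nat by lia.
  assert (Hroot : forall j e, exists l, RP q (2 * INR j - 2 * INR m) (sg e) l /\
     length l = (if e then 1 else if Nat.ltb m j then 2 else 0)%nat).
  { intros j e. destruct e; simpl sg.
    - destruct (Compare_dec.lt_eq_lt_dec j m) as [[h|h]|h].
      + assert (INR (S j) <= INR m) by (apply le_INR; lia). rewrite S_INR in H0.
        destruct (roots_e1_neg q (2 * INR j - 2 * INR m) ltac:(lra) ltac:(lra)) as [r Hr].
        exists [r]; auto.
      + subst. replace (2 * INR m - 2 * INR m) with 0 by ring.
        destruct (roots_e1_zero q ltac:(lra)) as [r Hr]. exists [r]; auto.
      + assert (INR (S m) <= INR j) by (apply le_INR; lia). rewrite S_INR in H0.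
        destruct (roots_e1_pos q (2 * INR j - 2 * INR m) ltac:(lra) ltac:(lra)) as [r Hr].
        exists [r]; auto.
    - destruct (Nat.ltb_spec m j).
      + assert (INR (S m) <= INR j) by (apply le_INR; lia). rewrite S_INR in H1.
        destruct (roots_em_pos q (2 * INR j - 2 * INR m) ltac:(lra) ltac:(lra)) as [r1 [r2 Hr]].
        exists [r1; r2]; auto.
      + assert (INR j <= INR m) by (apply le_INR; lia).
        exists []. split; auto. apply roots_em_none; lra. }
  set (R0 := fun j e => proj1_sig (constructive_indefinite_description _ (Hroot j e))).
  assert (HR0 : forall j e, RP q (2 * INR j - 2 * INR m) (sg e) (R0 j e) /\
     length (R0 j e) = (if e then 1 else if Nat.ltb m j then 2 else 0)%nat).
  { intros j e. unfold R0. apply proj2_sig. }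
  clearbody R0.
  assert (HRa : forall j e a, In a (R0 j e) -> 0 < a < PI/2 /\ hf (2 * INR j - 2 * INR m) (sg e) a = q).
  { intros j e a h. destruct (HR0 j e) as [[_ Hi] _]. apply Hi; auto. }
  set (inner := fun B => flat_map (fun e => map (mk m B e) (R0 (ct B) e)) [true; false]).
  exists (flat_map inner (allb (2*m))).
  assert (Hin : forall z B, In z (inner B) -> exists e a, In a (R0 (ct B) e) /\ z = mk m B e a).
  { intros z B h. unfold inner in h. apply in_flat_map in h. destruct h as [e [_ h]].
    apply in_map_iff in h. destruct h as [a [h1 h2]]. exists e, a; auto. }
  split; [|split].
  - apply NoDup_flat_map'.
    + apply allb_nodup.
    + intros B hB. apply allb_in in hB. unfold inner. apply NoDup_flat_map'.
      * constructor; [simpl; intros [h|[]]; discriminate|constructor; [simpl; tauto|constructor]].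
      * intros e _. apply NoDup_map_in; [apply (HR0 (ct B) e)|].
        intros a a' h1 h2 E. apply HRa in h1, h2.
        destruct (mk_inj m B e a B e a' Hm1 hB hB (proj1 h1) (proj1 h2) E) as [_ [_ ?]]; auto.
      * intros e e' z _ _ h1 h2. apply in_map_iff in h1, h2.
        destruct h1 as [a [h1 h1']], h2 as [a' [h2 h2']]. subst.
        apply HRa in h1', h2'.
        destruct (mk_inj m B e a B e' a' Hm1 hB hB (proj1 h1') (proj1 h2') (eq_sym h2)) as [_ [? _]]; auto.
    + intros B B' z hB hB' h1 h2. apply allb_in in hB, hB'.
      destruct (Hin z B h1) as [e [a [ha ->]]]. destruct (Hin _ B' h2) as [e' [a' [ha' E]]].
      apply HRa in ha, ha'.
      destruct (mk_inj m B e a B' e' a' Hm1 hB hB' (proj1 ha) (proj1 ha') E) as [? _]; auto.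
  - intros theta. split.
    + intros h. apply in_flat_map in h. destruct h as [B [hB h]]. apply allb_in in hB.
      destruct (Hin _ _ h) as [e [a [ha ->]]]. apply HRa in ha.
      apply mk_equil; auto; apply ha.
    + intros h. destruct (equil_mk m q theta Hm1 ltac:(lra) h) as [B [e [a [hB [ha [hf' ->]]]]]].
      apply in_flat_map. exists B. split; [apply allb_in; auto|].
      unfold inner. apply in_flat_map. exists e. split; [destruct e; simpl; auto|].
      apply in_map_iff. exists a. split; auto.
      destruct (HR0 (ct B) e) as [[_ Hi] _]. apply Hi. split; auto.
  - rewrite length_flat_map.
    rewrite (sum_count (fun B => Nat.ltb m (ct B))).
    2:{ intros B. unfold inner. rewrite length_flat_map. simpl.
        rewrite !length_map. rewrite (proj2 (HR0 (ct B) true)), (proj2 (HR0 (ct B) false)).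
        destruct (Nat.ltb m (ct B)); lia. }
    pose proof (count_sym m) as Hsym. pose proof (count_part m (allb (2*m))) as Hpart.
    destruct (count_binom (2*m) m) as [Hb _]. specialize (Hb ltac:(lia)).
    rewrite allb_length in *.
    set (G := length (filter (fun B => Nat.ltb m (ct B)) (allb (2*m)))) in *.
    set (Eq := length (filter (fun B => Nat.eqb (ct B) m) (allb (2*m)))) in *.
    assert (Hl : ((2 ^ (2*m) + 2 * G) + Eq = 2 ^ (2*m+1))%nat).
    { rewrite Nat.pow_add_r, Nat.pow_1_r. lia. }
    rewrite <- Hb.
    assert (E : INR (2 ^ (2*m) + 2 * G) = INR (2 ^ (2*m+1)) - INR Eq) by (rewrite <- Hl; rewrite (plus_INR (2^(2*m) + 2*G) Eq); ring).
    rewrite E, pow_INR. simpl (INR 2). replace (1+1) with 2 by ring. auto.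
Qed.
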